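(* Let $\Sigma$ be a finite alphabet and $w\in\Sigma^\star$. If every symbol of $\Sigma$ occurs in $w$ more than $|\Sigma|$ times, then the answer to Disjoint Factors on $w$ is positive, i.e., there exist pairwise disjoint (contiguous) subwords $w_a$ of $w$, one for each $a\in\Sigma$, such that each $w_a$ has length at least $2$ and begins and ends with $a$. *)

(* Defs.v *)
From mathcomp Require Import all_boot.
Set Implicit Arguments. Unset Strict Implicit. Unset Printing Implicit Defensive.

(* A factor (contiguous subword) of w is encoded by its start and end
   positions [i, j] (0-based, inclusive): it is w_i w_{i+1} ... w_j. *)

Definition good_factor (T : eqType) (w : seq T) (a : T) (i j : nat) : Prop :=
  [/\ i < j, j < size w, nth a w i = a & nth a w j = a].

Definition disjoint_factors (T : finType) (w : seq T) : Prop :=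
  exists s e : T -> nat,
    (forall a, good_factor w a (s a) (e a)) /\
    (forall a b, a != b -> (e a < s b) \/ (e b < s a)).

(* Main.v *)
Require Import Defs.
From mathcomp Require Import all_boot.
From mathcomp Require Import zify.
Set Implicit Arguments. Unset Strict Implicit. Unset Printing Implicit Defensive.

Lemma gen (T : finType) (m : nat) : forall (S : {set T}) (w : seq T), #|S| = m ->
  (forall a, a \in S -> #|S| < count_mem a w) ->
  exists s e : T -> nat, (forall a, a \in S -> good_factor w a (s a) (e a)) /\
    (forall a b, a \in S -> b \in S -> a != b -> (e a < s b) \/ (e b < s a)).
Proof.
elim: m => [|m IH] S w hS hc.
  exists (fun _ => 0), (fun _ => 0).
  by move/eqP: hS; rewrite cards_eq0 => /eqP ->; split => ?; rewrite inE.
have [a0 a0S] : {a0 | a0 \in S}.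
  case: (set_0Vmem S) => [S0|[x xS]]; last by exists x.
  by move: hS; rewrite S0 cards0.
pose P n := [exists a in S, 1 < count_mem a (take n w)].
have PE : exists n, P n.
  exists (size w); apply/existsP; exists a0; rewrite take_size a0S /=.
  have := hc a0 a0S; rewrite hS => h; exact: leq_trans h.
case: (ex_minnP PE) => n Pn nmin.
have nle : n <= size w.
  apply: nmin; apply/existsP; exists a0; rewrite take_size a0S /=.
  have := hc a0 a0S; rewrite hS => h; exact: leq_trans h.
case: n Pn nmin nle => [|n] Pn nmin nle.
  by move/existsP: Pn => [x /andP[_]]; rewrite take0.
have notPn : forall b, b \in S -> count_mem b (take n w) <= 1.
  move=> b bS; case: leqP => // hb.
  have : n.+1 <= n by apply: nmin; apply/existsP; exists b; rewrite bS.
  by rewrite ltnn.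
have tk : take n.+1 w = rcons (take n w) (nth a0 w n) by rewrite (take_nth a0).
move/existsP: Pn => [a /andP[aS ha]].
rewrite tk -cats1 count_cat /= in ha.
have hx : nth a0 w n = a.
  have := notPn a aS; case: eqP ha => [->//|_] /=; lia.
rewrite hx eqxx /= in ha.
have ain : a \in take n w.
  by apply/negPn/negP => /count_memPn h0; rewrite h0 in ha.
case/(nthP a): ain => i ilt hi.
rewrite size_take in ilt.
have iltn : i < n by rewrite nle in ilt.
rewrite nth_take // in hi.
pose S' := S :\ a.
have hS' : #|S'| = m by rewrite /S'; have := cardsD1 a S; rewrite aS hS /= => h; lia.
have hc' : forall b, b \in S' -> #|S'| < count_mem b (drop n.+1 w).
  move=> b; rewrite !inE => /andP[ba bS].
  have := hc b bS; rewrite -{1}(cat_take_drop n.+1 w) count_cat tk -cats1 count_cat /= hx.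
  have := notPn b bS; rewrite eq_sym (negbTE ba) hS hS' /= => h3 h4; lia.
have [s' [e' [H1 H2]]] := IH S' (drop n.+1 w) hS' hc'.
exists (fun c => if c == a then i else s' c + n.+1),
       (fun c => if c == a then n else e' c + n.+1); split.
  move=> c cS; case: eqP => [->|/eqP ca].
    by split => //; rewrite (set_nth_default a0).
  have cS' : c \in S' by rewrite !inE ca cS.
  case: (H1 c cS') => h1 h2 h3 h4; split.
  - lia.
  - by rewrite size_drop in h2; lia.
  - by rewrite nth_drop in h3; rewrite addnC.
  - by rewrite nth_drop in h4; rewrite addnC.
move=> c d cS dS cd.
case: eqP => [ca|/eqP ca]; case: eqP => [da|/eqP da].
- by move: cd; rewrite ca da eqxx.
- by left; lia.
- by right; lia.
have cS' : c \in S' by rewrite !inE ca cS.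
have dS' : d \in S' by rewrite !inE da dS.
by case: (H2 c d cS' dS' cd); [left|right]; lia.
Qed.

Theorem lemma32 (T : finType) (w : seq T) :
  (forall a : T, #|T| < count_mem a w) -> disjoint_factors w.
Proof.
move=> h.
have hc : forall a, a \in [set: T] -> #|[set: T]| < count_mem a w.
  by move=> a _; rewrite cardsT; exact: h.
have [s [e [H1 H2]]] := gen erefl hc.
by exists s, e; split => [a|a b]; [apply: H1; rewrite inE | apply: H2; rewrite inE].
Qed.
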